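(* Let $\mathfrak f$ be a simple compact Lie algebra and $n\in\mathbb N$. Suppose a Lie subalgebra $\mathfrak k\subset n\mathfrak f$ contains $\mathrm{diag}(\mathfrak f)=\{(X,\dots,X):X\in\mathfrak f\}$. Then there is a decomposition $n\mathfrak f=\bigoplus_{i=1}^s n_i\mathfrak f$ into a direct sum of ideals (grouping the $n$ copies of $\mathfrak f$ into $s$ groups of sizes $n_i$), with $s\ge1$, $n_i\ge1$, $\sum_in_i=n$, such that $\mathfrak k=\mathfrak k_1\oplus\cdots\oplus\mathfrak k_s$ with $\mathfrak k_i=\mathrm{diag}(\mathfrak f)\subset n_i\mathfrak f$.
   Context: $n\mathfrak f=\mathfrak f\oplus\cdots\oplus\mathfrak f$ ($n$ copies). *)

(* Defs.v *)
From HB Require Import structures.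
From mathcomp Require Import all_boot all_order all_algebra.
Set Implicit Arguments. Unset Strict Implicit. Unset Printing Implicit Defensive.
Import Order.TTheory GRing.Theory Num.Theory.
Local Open Scope ring_scope.

Definition is_lie_bracket (R : fieldType) (V : vectType R) (br : V -> V -> V) : Prop :=
  [/\ (forall (a : R) (x y z : V), br (a *: x + y) z = a *: br x z + br y z),
      (forall (a : R) (x y z : V), br z (a *: x + y) = a *: br z x + br z y),
      (forall x : V, br x x = 0) &
      (forall x y z : V, br x (br y z) + br y (br z x) + br z (br x y) = 0)].

Definition lie_ideal (R : fieldType) (V : vectType R) (br : V -> V -> V)
  (I : {vspace V}) : Prop :=
  forall x y : V, y \in I -> br x y \in I.

Definition lie_simple (R : fieldType) (V : vectType R) (br : V -> V -> V) : Prop :=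
  (exists x y : V, br x y != 0) /\
  (forall I : {vspace V}, lie_ideal br I -> I = 0%VS \/ I = fullv).

(* compact (real) Lie algebra: admits an ad-invariant inner product,
   i.e. a symmetric bilinear positive definite form B with
   B([x,y],z) + B(y,[x,z]) = 0. *)
Definition lie_compact (R : realFieldType) (V : vectType R) (br : V -> V -> V) : Prop :=
  exists B : V -> V -> R,
    [/\ (forall (a : R) (x y z : V), B (a *: x + y) z = a * B x z + B y z),
        (forall x y : V, B x y = B y x),
        (forall x : V, x != 0 -> 0 < B x x) &
        (forall x y z : V, B (br x y) z + B y (br x z) = 0)].

(* n f = f (+) ... (+) f, realized as {ffun 'I_n -> V} with componentwise bracket *)
Definition sum_bracket (R : fieldType) (V : vectType R) (br : V -> V -> V) (n : nat)
  (x y : {ffun 'I_n -> V}) : {ffun 'I_n -> V} :=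
  [ffun i => br (x i) (y i)].

Definition diag_elt (R : fieldType) (V : vectType R) (n : nat) (X : V) : {ffun 'I_n -> V} :=
  [ffun _ => X].

Definition lie_subalgebra (R : fieldType) (V : vectType R) (br : V -> V -> V) (n : nat)
  (k : {vspace {ffun 'I_n -> V}}) : Prop :=
  forall x y, x \in k -> y \in k -> sum_bracket br x y \in k.

(* Main.v *)
Require Import Defs.
From HB Require Import structures.
From mathcomp Require Import all_boot all_order all_algebra.
From Stdlib Require Import Classical.
Import Order.TTheory GRing.Theory Num.Theory.
Local Open Scope ring_scope.

Section Aux.
Variables (R : fieldType) (V : vectType R) (n : nat).
Definition evalf (a : 'I_n) (x : {ffun 'I_n -> V}) : V := x a.
Lemma evalf_lin a : linear (evalf a).
Proof. by move=> c x y; rewrite /evalf !ffunE. Qed.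
HB.instance Definition _ a := GRing.isLinear.Build R {ffun 'I_n -> V} V _ (evalf a) (evalf_lin a).
Definition maskf (s : seq 'I_n) (x : {ffun 'I_n -> V}) : {ffun 'I_n -> V} :=
  [ffun i => if i \in s then x i else 0].
Lemma maskf_lin s : linear (maskf s).
Proof.
move=> c x y; apply/ffunP => i; rewrite /maskf !ffunE.
by case: ifP => _; rewrite ?ffunE // scaler0 addr0.
Qed.
HB.instance Definition _ s := GRing.isLinear.Build R {ffun 'I_n -> V} {ffun 'I_n -> V} _ (maskf s) (maskf_lin s).

Lemma memkerP s (x : {ffun 'I_n -> V}) : reflect (forall i, i \in s -> x i = 0) (x \in lker (linfun (maskf s))).
Proof.
rewrite memv_ker lfunE /=; apply: (iffP eqP) => [H i Hi|H].
  by have := congr1 (fun f : {ffun 'I_n -> V} => f i) H; rewrite /maskf !ffunE Hi.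
by apply/ffunP => i; rewrite /maskf !ffunE; case: ifP => // /H.
Qed.

Variables (br : V -> V -> V) (k : {vspace {ffun 'I_n -> V}}).
Hypotheses (Hbr : is_lie_bracket br) (Hsimp : lie_simple br)
  (Hsub : lie_subalgebra br k) (Hdiag : forall X : V, diag_elt n X \in k).

Lemma br0r x : br x 0 = 0.
Proof.
case: Hbr => _ H2 _ _; have := H2 1 0 0 x.
rewrite !scale1r addr0 => /(congr1 (fun v => v - br x 0)).
by rewrite addrK subrr => <-.
Qed.
Lemma br0l x : br 0 x = 0.
Proof.
case: Hbr => H1 _ _ _; have := H1 1 0 0 x.
rewrite !scale1r addr0 => /(congr1 (fun v => v - br 0 x)).
by rewrite addrK subrr => <-.
Qed.
Lemma brZr c x y : br x (c *: y) = c *: br x y.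
Proof. by case: Hbr => _ H2 _ _; have := H2 c y 0 x; rewrite !addr0 br0r addr0. Qed.
Lemma brZl c x y : br (c *: x) y = c *: br x y.
Proof. by case: Hbr => H1 _ _ _; have := H1 c x 0 y; rewrite !addr0 br0l addr0. Qed.

Lemma simple_full (I : {vspace V}) v : lie_ideal br I -> v \in I -> v != 0 -> I = fullv.
Proof.
move=> HI vI v0; case: Hsimp => _ /(_ I HI) [] // I0.
by move: vI v0; rewrite I0 memv0 => ->.
Qed.

Lemma center0 U : U != 0 -> exists X, br X U != 0.
Proof.
move=> U0; apply/not_all_not_ex => H.
have HI : lie_ideal br <[U]>%VS.
  move=> x y /vlineP [c ->]; rewrite brZr.
  by have /negP := H x; rewrite negbK => /eqP ->; rewrite scaler0 mem0v.
have F := simple_full _ _ HI (memv_line U) U0.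
case: Hsimp => [[x [y Hxy]]] _; move: Hxy.
have : x \in <[U]>%VS by rewrite F memvf.
have : y \in <[U]>%VS by rewrite F memvf.
move=> /vlineP [cy ->] /vlineP [cx ->].
rewrite brZr brZl; case: Hbr => _ _ H3 _; by rewrite H3 !scaler0 eqxx.
Qed.

Definition rel (a j : 'I_n) : bool := (k <= lker (linfun (evalf a) - linfun (evalf j)))%VS.

Lemma relP a j : reflect (forall x, x \in k -> x a = x j) (rel a j).
Proof.
apply: (iffP eqlfun_inP) => H x /H; rewrite !lfunE //.
Qed.

Definition Isp (a : 'I_n) (s : seq 'I_n) : {vspace V} :=
  (linfun (evalf a) @: (k :&: lker (linfun (maskf s))))%VS.

Lemma Isp_ideal a s : lie_ideal br (Isp a s).
Proof.
move=> x y /memv_imgP [z]; rewrite memv_cap => /andP [zk /memkerP zs] ->.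
rewrite lfunE /= /evalf.
have -> : br x (z a) = sum_bracket br (diag_elt n x) z a by rewrite /sum_bracket !ffunE.
have -> : sum_bracket br (diag_elt n x) z a = linfun (evalf a) (sum_bracket br (diag_elt n x) z)
  by rewrite lfunE.
apply: memv_img; rewrite memv_cap Hsub //=; apply/memkerP => i /zs zi.
by rewrite /sum_bracket ffunE zi br0r.
Qed.

Lemma Isp_full a (s : seq 'I_n) (z : {ffun 'I_n -> V}) : z \in k -> (forall i, i \in s -> z i = 0) -> z a != 0 ->
  forall X, exists w, [/\ w \in k, (forall i, i \in s -> w i = 0) & w a = X].
Proof.
move=> zk zs za X.
have zI : z a \in Isp a s.
  have -> : z a = linfun (evalf a) z by rewrite lfunE.
  by apply: memv_img; rewrite memv_cap zk; apply/memkerP.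
have := memvf X; rewrite -(simple_full _ _ (Isp_ideal a s) zI za).
move=> /memv_imgP [w]; rewrite memv_cap lfunE => /andP [wk /memkerP ws] ->.
by exists w.
Qed.

Lemma sep a j : ~~ rel a j -> forall X, exists w, [/\ w \in k, w j = 0 & w a = X].
Proof.
move=> /subvPn [x xk]; rewrite memv_ker !lfunE /= !lfunE /= subr_eq0 => xaj X.
have zk : x - diag_elt n (x j) \in k by rewrite memvB.
have [||w [wk wj wa]] := Isp_full a [:: j] _ zk _ _ X.
- by move=> i; rewrite inE => /eqP ->; rewrite /diag_elt !ffunE subrr.
- by rewrite /diag_elt !ffunE subr_eq0; move: xaj; rewrite lfunE.
by exists w; split => //; apply: wj; rewrite inE.
Qed.

Lemma nz a (s : seq 'I_n) : (forall j, j \in s -> ~~ rel a j) ->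
  exists z, [/\ z \in k, (forall i, i \in s -> z i = 0) & z a != 0].
Proof.
elim: s => [_|j s IH Hs].
  case: Hsimp => [[x [y H]]] _.
  have x0 : x != 0 by apply: contraNneq H => ->; rewrite br0l.
  by exists (diag_elt n x); split => //; rewrite /diag_elt ffunE.
have [z [zk zs za]] := IH (fun i hi => Hs i (@mem_behead _ (j :: s) _ hi)).
have [X HX] := center0 _ za.
have [w [wk wj wa]] := sep _ _ (Hs j (mem_head _ _)) X.
exists (sum_bracket br w z); split; first by apply: Hsub.
  move=> i; rewrite inE => /orP [/eqP ->|/zs zi]; rewrite /sum_bracket ffunE.
    by rewrite wj br0l.
  by rewrite zi br0r.
by rewrite /sum_bracket ffunE wa.
Qed.

Lemma block_in a X : [ffun i => if rel a i then X else 0] \in k.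
Proof.
pose s := [seq j <- enum 'I_n | ~~ rel a j].
have [z [zk zs za]] : exists z, [/\ z \in k, (forall i, i \in s -> z i = 0) & z a != 0].
  by apply: nz => j; rewrite mem_filter => /andP [].
have [w [wk ws wa]] := Isp_full _ _ _ zk zs za X.
suff -> : [ffun i => if rel a i then X else 0] = w by [].
apply/ffunP => i; rewrite ffunE; case: ifP => H.
  by rewrite -wa; move/relP: H => /(_ w wk).
by rewrite ws // mem_filter H mem_enum.
Qed.

End Aux.

Theorem mainTheorem8 (R : rcfType) (V : vectType R) (br : V -> V -> V) (n : nat)
  (k : {vspace {ffun 'I_n -> V}}) :
  is_lie_bracket br -> lie_simple br -> lie_compact br ->
  (0 < n)%N ->
  lie_subalgebra br k ->
  (forall X : V, diag_elt n X \in k) ->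
  exists P : {set {set 'I_n}},
    [/\ partition P [set: 'I_n], (1 <= #|P|)%N &
        forall x : {ffun 'I_n -> V},
          x \in k <-> (forall B, B \in P -> forall i j, i \in B -> j \in B -> x i = x j)].
Proof.
move=> Hbr Hsimp _ n0 Hsub Hdiag.
pose r := @rel R V n k.
have eqr : {in [set: 'I_n] & &, equivalence_rel r}.
  move=> a b c _ _ _; split; first by apply/relP.
  move=> /relP Hab; apply/idP/idP => /relP H; apply/relP => x xk.
    by rewrite -Hab ?H.
  by rewrite Hab ?H.
pose P := equivalence_partition r [set: 'I_n].
have HP : partition P [set: 'I_n] := equivalence_partitionP eqr.
have PP := pblock_equivalence_partition eqr.
have triv : trivIset P by case/and3P: HP.
have cov : cover P = [set: 'I_n] by case/and3P: HP => /eqP.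
have pbP i : pblock P i \in P by apply: pblock_mem; rewrite cov inE.
have pbi i : i \in pblock P i by rewrite mem_pblock cov inE.
have inB B i j : B \in P -> i \in B -> j \in B -> r i j.
  move=> BP iB jB; rewrite -PP ?inE //.
  by rewrite (def_pblock triv BP iB).
exists P; split => //.
  by apply/card_gt0P; exists (pblock P (Ordinal n0)).
move=> x; split.
  move=> xk B BP i j iB jB; by move/relP: (inB B i j BP iB jB); apply.
move=> Hx.
have -> : x = \sum_(B in P) [ffun i => if i \in B then x i else 0].
  apply/ffunP => l; rewrite sum_ffunE (bigD1 (pblock P l)) //= ffunE pbi.
  rewrite big1 ?addr0 // => B /andP [BP /eqP nB]; rewrite ffunE.
  case: ifP => // lB; by case: nB; rewrite (def_pblock triv BP lB).
apply: memv_suml => B BP.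
case: (set_0Vmem B) => [B0|[b bB]].
  by move: HP BP; rewrite B0 => /and3P [_ _ /negP].
suff -> : [ffun i => if i \in B then x i else 0] = [ffun i => if r b i then x b else 0].
  exact: (block_in _ _ _ _ _ Hbr Hsimp Hsub Hdiag b (x b)).
have memB i : (i \in B) = r b i by rewrite -PP ?inE // (def_pblock triv BP bB).
apply/ffunP => i; rewrite !ffunE memB.
case: ifP => // H; rewrite (Hx B BP b i bB) //.
by rewrite memB.
Qed.
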